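(* Let $X$ be a regular topological space and let $\mathcal A\subseteq\mathcal P(X)$. Put $\overline{\mathcal A}=\{\overline{A}:A\in\mathcal A\}$ (closures in $X$). Then $X$ is $\mathcal A$-selectively pseudocompact if and only if $X$ is $\overline{\mathcal A}$-selectively pseudocompact.
   Context: For a topological space $X$ and $\mathcal A\subseteq\mathcal P(X)$, $X$ is called $\mathcal A$-selectively pseudocompact if for every sequence $\langle U_n:n\in\omega\rangle$ of pairwise disjoint non-empty open subsets of $X$ one can choose sets $A_n\in\mathcal A$ with $A_n\subseteq U_n$ such that the family $\{A_n:n\in\omega\}$ has an accumulation point, i.e. it is not locally finite: there is a point $x\in X$ every neighbourhood of which meets $A_n$ for infinitely many $n$. *)

(* Defs.v *)
From HB Require Import structures.
From mathcomp Require Import all_boot all_order all_algebra.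
From mathcomp Require Import all_classical all_reals all_analysis.
Set Implicit Arguments. Unset Strict Implicit. Unset Printing Implicit Defensive.
Local Open Scope classical_set_scope.

Definition sel_pseudocompact (T : topologicalType) (A : set (set T)) : Prop :=
  forall U : nat -> set T,
    (forall n, open (U n)) ->
    (forall n, U n !=set0) ->
    (forall n m, n <> m -> U n `&` U m = set0) ->
    exists An : nat -> set T,
      (forall n, A (An n) /\ An n `<=` U n) /\
      exists x : T, forall V : set T, nbhs x V ->
        infinite_set [set n : nat | An n `&` V !=set0].

(* Main.v *)
Require Import Defs.
From HB Require Import structures.
From mathcomp Require Import all_boot all_order all_algebra.
From mathcomp Require Import all_classical all_reals all_analysis.
Local Open Scope classical_set_scope.

Theorem lemma1p3 (T : topologicalType) (A : set (set T)) :
  @regular_space T ->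
  (sel_pseudocompact A <-> sel_pseudocompact [set closure B | B in A]).
Proof.
move=> reg; split.
- move=> hA U oU neU dU.
  have hV : forall n, exists W : set T,
      [/\ open W, W !=set0 & closure W `<=` U n].
    move=> n; case: (neU n) => a Ua.
    have nU : nbhs a (U n) by apply: open_nbhs_nbhs; split.
    have := reg a (U n) nU; case=> V nV clV.
    exists V°; split; first exact: open_interior.
      by exists a; apply: nbhs_singleton; apply: nbhs_interior.
    apply: subset_trans clV; apply: closureS; exact: interior_subset.
  have [W HW] := choice hV.
  have [An [HAn [x Hx]]] : exists An : nat -> set T,
      (forall n, A (An n) /\ An n `<=` W n) /\
      exists x : T, forall V : set T, nbhs x V ->
        infinite_set [set n : nat | An n `&` V !=set0].
    apply: hA.
    - by move=> n; case: (HW n).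
    - by move=> n; case: (HW n).
    - move=> n m nm; apply/seteqP; split=> // y [Wn Wm].
      rewrite -(dU n m nm); split.
        by case: (HW n) => _ _ c; apply: c; apply: subset_closure.
      by case: (HW m) => _ _ c; apply: c; apply: subset_closure.
  exists (fun n => closure (An n)); split.
    move=> n; split; first by exists (An n); [case: (HAn n)|].
    case: (HW n) => _ _ c; apply: subset_trans c.
    apply: closureS; by case: (HAn n).
  exists x => V nV fin; apply: (Hx V nV).
  apply: sub_finite_set fin => n /= [y [Ay Vy]].
  by exists y; split=> //; apply: subset_closure.
- move=> hA U oU neU dU.
  have [An [HAn [x Hx]]] := hA U oU neU dU.
  have hB : forall n, exists B, A B /\ closure B = An n.
    by move=> n; case: (HAn n) => -[B AB <-] _; exists B.
  have [B HB] := choice hB.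
  exists B; split.
    move=> n; split; first by case: (HB n).
    case: (HAn n) => _ s; apply: subset_trans s.
    case: (HB n) => _ <-; exact: subset_closure.
  exists x => V nV fin.
  apply: (Hx V° (nbhs_interior nV)).
  apply: sub_finite_set fin => n /= [y [cy Vy]].
  case: (HB n) => _ e; rewrite -e in cy.
  have nVy : nbhs y V° by apply: open_nbhs_nbhs; split=> //; exact: open_interior.
  have [z [Bz Vz]] := cy _ nVy.
  by exists z; split=> //; apply: interior_subset.
Qed.
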